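(* Let $(\Omega,\mathcal{F},(\mathcal{F}_t)_{t\in[0,T]},P)$ be a filtered probability space, $T>0$, and let $(X_t)_{t\in[0,T]}$ be a nonnegative continuous sub-martingale whose initial value $X_0$ is a deterministic constant. Let $M_t=\max_{0\le s\le t}X_s$. Let $p>0$ and suppose that $E\left(\int_0^T M_t^{2p}\,d[X,X]_t\right)<\infty$. Then $$E\left(X_T M_T^{p}\right)\ge\frac{p}{p+1}E\left(M_T^{p+1}\right)+\frac{1}{p+1}X_0^{p+1}.$$
   Context: $[X,X]_t$ denotes the quadratic variation of $X$. $M_t$ is the running maximum of $X$. *)

(* Defs.v *)
From HB Require Import structures.
From mathcomp Require Import all_boot all_order all_algebra.
From mathcomp Require Import all_classical all_reals all_analysis.
Set Implicit Arguments. Unset Strict Implicit. Unset Printing Implicit Defensive.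
Import Order.TTheory GRing.Theory Num.Theory.
Import numFieldNormedType.Exports.
Local Open Scope classical_set_scope.
Local Open Scope ring_scope.

Section Defs.
Context {d : measure_display} {Omega : measurableType d} {R : realType}.

Definition filtration (T : R) (F : R -> set (set Omega)) : Prop :=
  (forall t, 0 <= t <= T -> sigma_algebra setT (F t) /\ F t `<=` measurable) /\
  (forall s t, 0 <= s -> s <= t -> t <= T -> F s `<=` F t).

Definition adapted (T : R) (F : R -> set (set Omega)) (X : R -> Omega -> R)
  : Prop :=
  forall t, 0 <= t <= T ->
    forall B : set R, measurable B -> F t (X t @^-1` B).

(* Submartingale on [0,T] w.r.t. F and P, stated without conditional
   expectations: E[X_s 1_A] <= E[X_t 1_A] for s <= t and A in F_s. *)
Definition submartingale (P : probability Omega R) (T : R)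
  (F : R -> set (set Omega)) (X : R -> Omega -> R) : Prop :=
  adapted T F X /\
  (forall t, 0 <= t <= T -> P.-integrable setT (EFin \o X t)) /\
  (forall s t, 0 <= s -> s <= t -> t <= T -> forall A, F s A ->
     (\int[P]_(w in A) (X s w)%:E <= \int[P]_(w in A) (X t w)%:E)%E).

Definition running_max (X : R -> Omega -> R) (t : R) (w : Omega) : R :=
  sup [set X s w | s in `[0, t]%classic].

Definition cvg_in_prob (P : probability Omega R) (Y : nat -> Omega -> R)
  (Z : Omega -> R) : Prop :=
  forall e : R, 0 < e ->
    (fun n => P [set w | e <= `|Y n w - Z w|]) @ \oo --> 0%E.

Definition sq_incr_sum (X : R -> Omega -> R) (t : R) (n : nat) (w : Omega)
  : R :=
  \sum_(k < n) (X (k.+1%:R * t / n%:R) w - X (k%:R * t / n%:R) w) ^+ 2.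

(* Q is the quadratic variation [X,X] of X on [0,T]: Q starts at 0, has
   continuous nondecreasing paths, and for each t in [0,T], Q_t is the
   limit in probability of the sums of squared increments of X along
   partitions of [0,t] with mesh -> 0 (uniform partitions here). *)
Definition quadratic_variation (P : probability Omega R) (T : R)
  (X Q : R -> Omega -> R) : Prop :=
  (forall w, Q 0 w = 0) /\
  (forall w, {within `[0, T]%classic, continuous (fun t => Q t w)}) /\
  (forall w s t, 0 <= s -> s <= t -> t <= T -> Q s w <= Q t w) /\
  (forall t, 0 <= t <= T -> cvg_in_prob P (sq_incr_sum X t) (Q t)).

(* Pathwise Riemann-Stieltjes integral \int_0^T f_t dQ_t, as the limit
   of Riemann-Stieltjes sums over uniform partitions (valued in \bar R). *)
Definition rs_integral (T : R) (f Q : R -> Omega -> R) (w : Omega)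
  : \bar R :=
  limn (fun n : nat => (\sum_(k < n) f (k%:R * T / n%:R) w *
          (Q (k.+1%:R * T / n%:R) w - Q (k%:R * T / n%:R) w))%:E).

End Defs.

(* Main.v *)
Require Import Defs.
From HB Require Import structures.
From mathcomp Require Import all_boot all_order all_algebra.
From mathcomp Require Import all_classical all_reals all_analysis.
From mathcomp Require Import measurable_realfun ring lra.
Import Order.TTheory GRing.Theory Num.Theory.
Import numFieldNormedType.Exports.
Local Open Scope classical_set_scope.
Local Open Scope ring_scope.

Section K.
Context (R : realType) (p : R).
Hypothesis p0 : 0 < p.

Definition phi (c x : R) := (Num.min x c) `^ p.
Definition psi (c x : R) := (Num.min x c) `^ (p + 1).

Lemma powRS x : 0 <= x -> x `^ (p + 1) = x * x `^ p.
Proof.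
move=> x0; rewrite addrC powRD ?powRr1 //.
by apply/implyP => /eqP h; exfalso; have := p0; lra.
Qed.

Lemma key_ineq c a b : 0 <= c -> 0 <= a -> a <= b ->
  b * phi c a + p / (p + 1) * psi c b <= b * phi c b + p / (p + 1) * psi c a.
Proof.
move=> c0 a0 ab; rewrite /phi /psi.
set a' := Num.min a c; set b' := Num.min b c.
have a'0 : 0 <= a' by rewrite le_min a0.
have a'b' : a' <= b' by rewrite /a' /b' le_min !ge_min ab lexx orbT.
have b'b : b' <= b by rewrite ge_min lexx.
have b'0 : 0 <= b' by apply: le_trans a'b'.
have AB : a' `^ p <= b' `^ p by apply: ge0_ler_powR => //; [exact: ltW|rewrite nnegrE..].
have p10 : 0 < p + 1 by rewrite addr_gt0.
have Y := @conjugate_powR R b' (a' `^ p) (p + 1) ((p + 1) / p) b'0 (powR_ge0 _ _) p10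
  (divr_gt0 p10 p0).
have e1 : (p + 1)^-1 + ((p + 1) / p)^-1 = 1.
  by rewrite invf_div; field; rewrite gt_eqF // gt_eqF.
have {}Y := Y e1.
have e2 : (a' `^ p) `^ ((p + 1) / p) = a' `^ (p + 1).
  by rewrite -powRrM mulrC divfK // gt_eqF.
rewrite e2 invf_div in Y.
rewrite !powRS // in Y *.
set A := a' `^ p in Y AB *; set B := b' `^ p in Y AB *.
have h1 : 0 <= (b - b') * (B - A) by apply: mulr_ge0; lra.
have q1 : p / (p + 1) = 1 - (p + 1)^-1 by field; rewrite gt_eqF.
rewrite q1.
set r := (p + 1)^-1 in Y q1 *.
rewrite mulrC mulrA in Y.
rewrite -[_ * p * r]mulrA q1 in Y.
clearbody a' b' A B r.
nra.
Qed.
End K.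

Lemma stair_inv (R : realType) (h z : R) (K : nat) : 0 < h -> 0 <= z ->
  let S := \sum_(j < K) (if (j.+1)%:R * h <= z then h else 0) in
  [/\ S <= z, (K%:R * h <= z -> S = K%:R * h) & (z < K%:R * h -> z < S + h)].
Proof.
move=> h0 z0; elim: K => [|K [IH1 IH2 IH3]] /=.
  by rewrite big_ord0 mul0r; split => // h1; lra.
rewrite big_ord_recr /=.
have eK : (K.+1)%:R * h = K%:R * h + h by rewrite -addn1 natrD mulrDl mul1r.
rewrite eK.
set S := \sum_(i < K) _ in IH1 IH2 IH3 *.
case: (leP (K%:R * h + h) z) => hz.
  have hk : K%:R * h <= z by lra.
  by rewrite (IH2 hk); split => // h1; lra.
rewrite addr0; split => //.
move=> _; case: (leP (K%:R * h) z) => hz2; first by rewrite IH2 //.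
exact: IH3.
Qed.

Lemma stair (R : realType) (h z : R) (K : nat) : 0 < h -> 0 <= z -> z <= K%:R * h ->
  let S := \sum_(j < K) (if (j.+1)%:R * h <= z then h else 0) in S <= z <= S + h.
Proof.
move=> h0 z0 zK /=; have [A1 A2 A3] := @stair_inv R h z K h0 z0.
apply/andP; split => //; move: zK; rewrite le_eqVlt => /orP[/eqP e|l].
  by rewrite A2 ?e //; lra.
by apply: ltW; apply: A3.
Qed.

Lemma cont_eps (R : realType) (f : R -> R) (a b c e : R) :
  {within `[a, b], continuous f} -> c \in `[a, b] -> 0 < e ->
  exists2 del, 0 < del & forall s, s \in `[a, b] -> `|c - s| < del -> `|f c - f s| < e.
Proof.
move=> fc cab e0.
have := (subspace_continuousP _ _).1 fc c cab.
move=> /cvgrPdist_lt /(_ e e0).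
rewrite /within => /nbhs_ballP [del del0 H].
exists del => // s sab cs; apply: (H s) => //.
Qed.

Lemma powR_cont (R : realType) (r M : R) : 0 < M -> {for M, continuous (fun x : R => x `^ r)}.
Proof.
move=> M0; apply: differentiable_continuous; apply/derivable1_diffP.
by apply: derivable_powR; rewrite in_itv /= M0.
Qed.
Section Main.
Context (d : measure_display) (Omega : measurableType d) (R : realType)
  (P : probability Omega R) (T : R) (F : R -> set (set Omega))
  (X : R -> Omega -> R) (x0 p : R).
Hypothesis T0 : 0 < T.
Hypothesis hF : filtration T F.
Hypothesis hX : submartingale P T F X.
Hypothesis Xge0 : forall t w, 0 <= t <= T -> 0 <= X t w.
Hypothesis Xc : forall w, {within `[0, T], continuous (fun t => X t w)}.
Hypothesis X0 : forall w, X 0 w = x0.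
Hypothesis p0 : 0 < p.

Lemma Fmeas t A : 0 <= t <= T -> F t A -> measurable A.
Proof. by move=> tT FA; apply: ((hF.1 t tT).2). Qed.

Lemma mX t : 0 <= t <= T -> measurable_fun setT (X t).
Proof.
move=> tT _ B mB; rewrite setTI; apply: (Fmeas _ _ tT); exact: hX.1 t tT B mB.
Qed.

Lemma FU t A B : 0 <= t <= T -> F t A -> F t B -> F t (A `|` B).
Proof.
move=> tT FA FB; have [h0 _ hU] := (hF.1 t tT).1.
pose S := fun n : nat => if n == 0%N then A else if n == 1%N then B else set0.
have -> : A `|` B = \bigcup_n S n.
  apply/seteqP; split => [w [Aw|Bw]|w [n _]]; first by exists 0%N.
    by exists 1%N.
  by rewrite /S; case: ifP => _; [left|case: ifP => _ //; right].
by apply: hU => n; rewrite /S; case: ifP => _ //; case: ifP.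
Qed.

Lemma Fle s t A : 0 <= s -> s <= t -> t <= T -> F s A -> F t A.
Proof. move=> s0 st tT; exact: hF.2. Qed.

Lemma Fge t u : 0 <= t <= T -> F t [set w | u <= X t w].
Proof.
move=> tT; have -> : [set w | u <= X t w] = X t @^-1` `[u, +oo[.
  by apply/seteqP; split => w /=; rewrite in_itv /= andbT.
by apply: hX.1 => //; exact: measurable_itv.
Qed.

Definition tg (n k : nat) : R := k%:R * T / n%:R.

Lemma tg_ge0 n k : 0 <= tg n k.
Proof. by rewrite /tg divr_ge0 // mulr_ge0 // ltW. Qed.

Lemma tg_leT n k : (0 < n)%N -> (k <= n)%N -> tg n k <= T.
Proof.
move=> n0 kn; rewrite /tg ler_pdivrMr ?ltr0n // mulrC ler_pM2l //.
by rewrite ler_nat.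
Qed.

Lemma tg_le n j k : (j <= k)%N -> tg n j <= tg n k.
Proof.
move=> jk; rewrite /tg ler_wpM2r ?invr_ge0 //; apply: ler_wpM2r; [exact: ltW|by rewrite ler_nat].
Qed.

Lemma tg0 n : tg n 0 = 0.
Proof. by rewrite /tg mul0r mul0r. Qed.

Lemma tgn n : (0 < n)%N -> tg n n = T.
Proof. by move=> n0; rewrite /tg mulrAC divff ?mul1r // pnatr_eq0 -lt0n. Qed.

Fixpoint Nm (n k : nat) (w : Omega) : R :=
  if k is k'.+1 then Num.max (Nm n k' w) (X (tg n k'.+1) w) else X 0 w.


Lemma NmS n k w : Nm n k.+1 w = Num.max (Nm n k w) (X (tg n k.+1) w).
Proof. by []. Qed.

Lemma Nm_ge_X n j k w : (0 < n)%N -> (k <= n)%N -> (j <= k)%N ->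
  X (tg n j) w <= Nm n k w.
Proof.
move=> n0; elim: k => [|k IH] kn jk.
  by move: jk; rewrite leqn0 => /eqP ->; rewrite tg0.
rewrite NmS; move: jk; rewrite leq_eqVlt => /orP[/eqP ->|jk].
  by rewrite le_max lexx orbT.
by rewrite le_max IH ?(ltnW kn).
Qed.

Lemma Nm_ge_x0 n k w : (0 < n)%N -> (k <= n)%N -> x0 <= Nm n k w.
Proof. by move=> n0 kn; rewrite -(X0 w) -(tg0 n); apply: Nm_ge_X. Qed.

Lemma x0_ge0 : 0 <= x0.
Proof. by rewrite -(X0 point); apply: Xge0; rewrite lexx ltW. Qed.

Lemma Nm_le n k w (B : R) : (0 < n)%N -> (k <= n)%N ->
  (forall t, 0 <= t <= T -> X t w <= B) -> Nm n k w <= B.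
Proof.
move=> n0; elim: k => [|k IH] kn XB.
  by apply: XB; rewrite lexx ltW.
rewrite NmS ge_max IH ?(ltnW kn) //=; apply: XB.
by rewrite tg_ge0 tg_leT.
Qed.

Lemma Nm_meas n k : (0 < n)%N -> (k <= n)%N -> measurable_fun setT (Nm n k).
Proof.
move=> n0; elim: k => [|k IH] kn.
  by apply: mX; rewrite lexx ltW.
apply: measurable_maxr; first exact: IH (ltnW kn).
by apply: mX; rewrite tg_ge0 tg_leT.
Qed.

Lemma Nm_F n k u : (0 < n)%N -> (k <= n)%N ->
  F (tg n k) [set w | u <= Nm n k w].
Proof.
move=> n0; elim: k => [|k IH] kn.
  by rewrite tg0; apply: Fge; rewrite lexx ltW.
have tkT : 0 <= tg n k.+1 <= T by rewrite tg_ge0 tg_leT.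
have -> : [set w | u <= Nm n k.+1 w] =
    [set w | u <= Nm n k w] `|` [set w | u <= X (tg n k.+1) w].
  by apply/seteqP; split => w /=; rewrite le_max => /orP.
apply: FU => //; last exact: Fge.
apply: (Fle (tg n k)); [exact: tg_ge0|exact: tg_le|by case/andP: tkT|].
exact: IH (ltnW kn).
Qed.

Lemma Nm_cases n k w : Nm n k.+1 w = Nm n k w \/
  (Nm n k w <= X (tg n k.+1) w /\ Nm n k.+1 w = X (tg n k.+1) w).
Proof.
rewrite NmS; case: (leP (Nm n k w) (X (tg n k.+1) w)) => h.
  by right.
by left.
Qed.



Lemma int_indic (A : set Omega) (g : Omega -> R) :
  (\int[P]_w ((\1_A w * g w)%:E) = \int[P]_(w in A) (g w)%:E)%E.
Proof.
rewrite [RHS]integral_mkcond; apply: eq_integral => w _.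
rewrite /patch indicE; case: (w \in A) => /=; first by rewrite mul1r.
by rewrite mul0r.
Qed.

Lemma int_sum_indic (g : Omega -> R) (A : nat -> set Omega) (h : R) (K : nat) :
  measurable_fun setT g -> (forall w, 0 <= g w) -> (forall j, measurable (A j)) ->
  0 <= h ->
  (\int[P]_w (((\sum_(j < K) h * \1_(A j) w) * g w)%:E) =
   \sum_(j < K) h%:E * \int[P]_(w in A j) (g w)%:E)%E.
Proof.
move=> mg g0 mA h0.
transitivity (\int[P]_w (\sum_(j < K) (h * \1_(A j) w * g w)%:E))%E.
  by apply: eq_integral => w _; rewrite sumEFin mulr_suml.
rewrite ge0_integral_sum //; last first.
- move=> j w _; rewrite lee_fin mulr_ge0 ?mulr_ge0 //.
- move=> j; apply/measurable_EFinP; apply: measurable_funM => //.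
  by apply: measurable_funM => //; exact: measurable_indic.
apply: eq_bigr => j _; rewrite -int_indic -ge0_integralZl //.
- by apply: eq_integral => w _; rewrite -EFinM mulrA.
- by apply/measurable_EFinP; apply: measurable_funM => //; exact: measurable_indic.
- by move=> w _; rewrite lee_fin mulr_ge0.
Qed.


Lemma A1 s t (Z : Omega -> R) (B : R) : 0 <= s -> s <= t -> t <= T ->
  measurable_fun setT Z -> (forall w, 0 <= Z w <= B) ->
  (forall v, F s [set w | v <= Z w]) ->
  (\int[P]_w (Z w * X s w)%:E <= \int[P]_w (Z w * X t w)%:E)%E.
Proof.
move=> s0 st tT mZ ZB ZF.
have sT : 0 <= s <= T by rewrite s0 (le_trans st tT).
have tT' : 0 <= t <= T by rewrite (le_trans s0 st) tT.
have mXs := mX _ sT; have mXt := mX _ tT'.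
have Xs0 w : 0 <= X s w by exact: Xge0.
have Xt0 w : 0 <= X t w by exact: Xge0.
have Z0 w : 0 <= Z w by case/andP: (ZB w).
set C := (\int[P]_w (X s w)%:E)%E.
have Cfin : C \is a fin_num by apply: integrable_fin_num => //; exact: hX.2.1 s sT.
have C0 : (0 <= C)%E by apply: integral_ge0 => w _; rewrite lee_fin.
have key m : (\int[P]_w (Z w * X s w)%:E <=
    \int[P]_w (Z w * X t w)%:E + ((m.+1%:R)^-1 * fine C)%:E)%E.
  set h := (m.+1%:R)^-1 : R.
  have h0 : 0 < h by rewrite invr_gt0 ltr0n.
  set K := ((Num.truncn B).+1 * m.+1)%N.
  have BK : B <= K%:R * h.
    rewrite /K natrM /h mulfK ?pnatr_eq0 //; exact: ltW (truncnS_gt B).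
  pose A := fun j : nat => [set w | (j.+1)%:R * h <= Z w].
  have mA j : measurable (A j) by apply: (Fmeas _ _ sT); exact: ZF.
  pose Zm w := \sum_(j < K) h * \1_(A j) w.
  have Zm_eq w : Zm w = \sum_(j < K) (if (j.+1)%:R * h <= Z w then h else 0).
    apply: eq_bigr => j _; rewrite indicE; case: ifPn => hj.
      by rewrite (mem_set (hj : A j w)) mulr1.
    by rewrite memNset ?mulr0 //; apply/negP.
  have hst w : Zm w <= Z w <= Zm w + h.
    rewrite Zm_eq; apply: stair => //; exact: le_trans (andP (ZB w)).2 BK.
  have Zm0 w : 0 <= Zm w by apply: sumr_ge0 => j _; rewrite mulr_ge0 // ?ltW.
  have mZm : measurable_fun setT Zm.
    apply: measurable_sum => j; apply: measurable_funM => //.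
  have I1 : (\int[P]_w (Z w * X s w)%:E <= \int[P]_w (Zm w * X s w)%:E + (h * fine C)%:E)%E.
    apply: (@le_trans _ _ (\int[P]_w ((Zm w * X s w)%:E + (h * X s w)%:E))%E).
      apply: ge0_le_integral => //.
      - by move=> w _; rewrite lee_fin mulr_ge0.
      - by apply/measurable_EFinP; apply: measurable_funM.
      - by apply: emeasurable_funD; apply/measurable_EFinP; apply: measurable_funM.
      - move=> w _; rewrite -EFinD lee_fin -mulrDl; apply: ler_wpM2r => //.
        by case/andP: (hst w).
    rewrite ge0_integralD //; try by [move=> w _; rewrite lee_fin mulr_ge0 // ltW];
      try by [apply/measurable_EFinP; apply: measurable_funM].
    rewrite leeD2l // (_ : (\int[P]_w (h * X s w)%:E = h%:E * C)%E).
      by rewrite EFinM fineK.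
    under eq_integral do rewrite EFinM.
    rewrite ge0_integralZl //.
    all: try by [move=> w _; rewrite lee_fin].
    all: try by rewrite lee_fin ltW.
    all: try by apply/measurable_EFinP.
  have I2 : (\int[P]_w (Zm w * X s w)%:E <= \int[P]_w (Zm w * X t w)%:E)%E.
    rewrite /Zm !int_sum_indic //; [|exact: ltW h0|exact: ltW h0]; apply: lee_sum => j _.
    apply: lee_wpmul2l; first by rewrite lee_fin ltW.
    by apply: hX.2.2 => //; exact: ZF.
  have I3 : (\int[P]_w (Zm w * X t w)%:E <= \int[P]_w (Z w * X t w)%:E)%E.
    apply: ge0_le_integral => //.
    - by move=> w _; rewrite lee_fin mulr_ge0.
    - by apply/measurable_EFinP; apply: measurable_funM.
    - by apply/measurable_EFinP; apply: measurable_funM.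
    - move=> w _; rewrite lee_fin; apply: ler_wpM2r => //.
      by case/andP: (hst w).
  apply: (le_trans I1); apply: leeD2r; exact: le_trans I2 I3.
apply/lee_addgt0Pr => e e0.
apply: (le_trans (key (Num.truncn (fine C / e)))); rewrite leeD2l // lee_fin.
have fC0 : 0 <= fine C by rewrite fine_ge0.
have := truncnS_gt (fine C / e); set k := Num.truncn _ => hk.
rewrite mulrC -ler_pdivlMr ?invr_gt0 ?ltr0n // invrK.
rewrite -ler_pdivrMl // mulrC; exact: ltW.
Qed.

Lemma phi_ge0 c x : 0 <= phi R p c x.
Proof. exact: powR_ge0. Qed.

Lemma psi_ge0 c x : 0 <= psi R p c x.
Proof. exact: powR_ge0. Qed.

Lemma phi_le c x : 0 <= c -> 0 <= x -> phi R p c x <= c `^ p.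
Proof.
move=> c0 x0'; apply: ge0_ler_powR; rewrite ?nnegrE ?le_min ?x0' ?ge_min ?lexx ?orbT //.
exact: ltW.
Qed.

Lemma psi_le c x : 0 <= c -> 0 <= x -> psi R p c x <= c `^ (p + 1).
Proof.
move=> c0 x0'; apply: ge0_ler_powR; rewrite ?nnegrE ?le_min ?x0' ?ge_min ?lexx ?orbT //.
by rewrite addr_ge0 // ltW.
Qed.

Lemma mphi c (f : Omega -> R) : measurable_fun setT f ->
  measurable_fun setT (fun w => phi R p c (f w)).
Proof.
move=> mf; apply: (measurableT_comp (measurable_powR p)).
by apply: measurable_minr => //; exact: measurable_cst.
Qed.

Lemma mpsi c (f : Omega -> R) : measurable_fun setT f ->
  measurable_fun setT (fun w => psi R p c (f w)).
Proof.
move=> mf; apply: (measurableT_comp (measurable_powR (p + 1))).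
by apply: measurable_minr => //; exact: measurable_cst.
Qed.

Lemma FsetT t : 0 <= t <= T -> F t setT.
Proof.
move=> tT; have [h0 hC _] := (hF.1 t tT).1.
by rewrite -(setD0 setT); apply: hC.
Qed.

Lemma Fset0 t : 0 <= t <= T -> F t set0.
Proof. by move=> tT; have [h0 _ _] := (hF.1 t tT).1. Qed.

Lemma powR_le_iff v y : 0 < v -> 0 <= y -> (v <= y `^ p) = (v `^ p^-1 <= y).
Proof.
move=> v0 y0.
have ep : p * p^-1 = 1 by rewrite mulfV // gt_eqF.
have ip : 0 < p^-1 by rewrite invr_gt0.
apply/idP/idP => h.
  have e : (y `^ p) `^ p^-1 = y by rewrite -powRrM ep powRr1.
  rewrite -e; apply: ge0_ler_powR => //; [exact: ltW | by rewrite nnegrE ltW | by rewrite nnegrE powR_ge0].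
have e : (v `^ p^-1) `^ p = v by rewrite -powRrM mulVf ?gt_eqF // powRr1 // ltW.
rewrite -{1}e; apply: ge0_ler_powR => //; [exact: ltW | by rewrite nnegrE powR_ge0].
Qed.

Lemma F_phi n k c v : (0 < n)%N -> (k <= n)%N -> 0 <= c ->
  F (tg n k) [set w | v <= phi R p c (Nm n k w)].
Proof.
move=> n0 kn c0; have tkT : 0 <= tg n k <= T by rewrite tg_ge0 tg_leT.
case: (leP v 0) => v0.
  have -> : [set w | v <= phi R p c (Nm n k w)] = setT.
    by apply/seteqP; split => w //= _; apply: le_trans v0 (phi_ge0 _ _).
  exact: FsetT.
have hw w : (v <= phi R p c (Nm n k w)) = (v `^ p^-1 <= Nm n k w) && (v `^ p^-1 <= c).
  rewrite /phi powR_le_iff // ?le_min //.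
  by rewrite (le_trans x0_ge0 (Nm_ge_x0 _ _ _ n0 kn)) c0.
case: (leP (v `^ p^-1) c) => vc.
  have -> : [set w | v <= phi R p c (Nm n k w)] = [set w | v `^ p^-1 <= Nm n k w].
    by apply/seteqP; split => w /=; rewrite hw vc andbT.
  exact: Nm_F.
have -> : [set w | v <= phi R p c (Nm n k w)] = set0.
  apply/seteqP; split => w //=; rewrite hw => /andP[_ h].
  by move: vc; rewrite ltNge h.
exact: Fset0.
Qed.

Lemma intDZ (f g : Omega -> R) (a : R) : measurable_fun setT f ->
  measurable_fun setT g -> (forall w, 0 <= f w) -> (forall w, 0 <= g w) ->
  0 <= a ->
  (\int[P]_w (f w + a * g w)%:E = \int[P]_w (f w)%:E + a%:E * \int[P]_w (g w)%:E)%E.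
Proof.
move=> mf mg f0 g0 a0.
under eq_integral do rewrite EFinD EFinM.
rewrite ge0_integralD //; first last.
- by apply: emeasurable_funM => //; apply/measurable_EFinP.
- by move=> w _; rewrite -EFinM lee_fin mulr_ge0.
- by apply/measurable_EFinP.
- by move=> w _; rewrite lee_fin.
by rewrite ge0_integralZl // ?lee_fin // => [|w _]; [apply/measurable_EFinP|rewrite lee_fin].
Qed.

Lemma int_cst r : (\int[P]_w (r%:E) = r%:E)%E.
Proof. rewrite integral_cst // -[RHS]mule1; congr (_ * _)%E; exact: probability_setT P. Qed.

Lemma fin_bound (f : Omega -> R) B : measurable_fun setT f ->
  (forall w, 0 <= f w <= B) -> (\int[P]_w (f w)%:E)%E \is a fin_num.
Proof.
move=> mf fB; rewrite ge0_fin_numE; last first.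
  by apply: integral_ge0 => w _; rewrite lee_fin; case/andP: (fB w).
apply: (@le_lt_trans _ _ (\int[P]_w (B%:E))%E); last by rewrite int_cst ltey.
apply: ge0_le_integral => //.
- by move=> w _; rewrite lee_fin; case/andP: (fB w).
- by apply/measurable_EFinP.
- by move=> w _; rewrite lee_fin; case/andP: (fB w).
Qed.

Lemma disc n c k : (0 < n)%N -> (k <= n)%N -> x0 <= c ->
  ((p / (p + 1))%:E * \int[P]_w (psi R p c (Nm n k w))%:E
    + (x0 * phi R p c x0 - p / (p + 1) * psi R p c x0)%:E
   <= \int[P]_w (phi R p c (Nm n k w) * X (tg n k) w)%:E)%E.
Proof.
move=> n0 + xc; have c0 : 0 <= c := le_trans x0_ge0 xc.
set q := p / (p + 1).
have q0 : 0 <= q by rewrite divr_ge0 // ltW // addr_gt0.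
elim: k => [|k IH] kn.
  have e1 : (\int[P]_w (psi R p c (Nm n 0 w))%:E = (psi R p c x0)%:E)%E.
    by rewrite -int_cst; apply: eq_integral => w _; rewrite /= X0.
  have e2 : (\int[P]_w (phi R p c (Nm n 0 w) * X (tg n 0) w)%:E = (phi R p c x0 * x0)%:E)%E.
    by rewrite -int_cst; apply: eq_integral => w _; rewrite tg0 /= X0.
  rewrite e1 e2 -EFinM -EFinD lee_fin.
  have -> : q * psi R p c x0 + (x0 * phi R p c x0 - q * psi R p c x0) =
    phi R p c x0 * x0 by ring.
  exact: lexx.
have kn' := ltnW kn; have {}IH := IH kn'.
have tkT : 0 <= tg n k <= T by rewrite tg_ge0 tg_leT.
have tk1T : 0 <= tg n k.+1 <= T by rewrite tg_ge0 tg_leT.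
have mNk := Nm_meas _ _ n0 kn'; have mNk1 := Nm_meas _ _ n0 kn.
have mY1 := mX _ tk1T; have mYk := mX _ tkT.
have Y10 w : 0 <= X (tg n k.+1) w by exact: Xge0.
have Yk0 w : 0 <= X (tg n k) w by exact: Xge0.
have Nk0 w : 0 <= Nm n k w := le_trans x0_ge0 (Nm_ge_x0 _ _ w n0 kn').
have pw w : phi R p c (Nm n k w) * X (tg n k.+1) w + q * psi R p c (Nm n k.+1 w) <=
            phi R p c (Nm n k.+1 w) * X (tg n k.+1) w + q * psi R p c (Nm n k w).
  case: (Nm_cases n k w) => [->|[h ->]]; first exact: lexx.
  have := @key_ineq R p p0 c _ _ c0 (Nk0 w) h.
  by rewrite -/q [X _ w * _]mulrC [X _ w * phi _ _ _ _]mulrC.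
have int1 : (\int[P]_w (phi R p c (Nm n k w) * X (tg n k.+1) w + q * psi R p c (Nm n k.+1 w))%:E <=
    \int[P]_w (phi R p c (Nm n k.+1 w) * X (tg n k.+1) w + q * psi R p c (Nm n k w))%:E)%E.
  apply: ge0_le_integral => //.
  - by move=> w _; rewrite lee_fin; apply: addr_ge0; apply: mulr_ge0; rewrite ?phi_ge0 ?psi_ge0 ?Y10.
  - apply/measurable_EFinP; apply: measurable_funD; first by apply: measurable_funM => //; exact: mphi.
    by apply: measurable_funM => //; exact: mpsi.
  - apply/measurable_EFinP; apply: measurable_funD; first by apply: measurable_funM => //; exact: mphi.
    by apply: measurable_funM => //; exact: mpsi.
  - by move=> w _; rewrite lee_fin.
rewrite !intDZ in int1; first last.
all: try exact: q0.
all: try by move=> w; apply: psi_ge0.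
all: try by move=> w; rewrite mulr_ge0 ?phi_ge0.
all: try exact: mpsi.
all: try by apply: measurable_funM => //; exact: mphi.
have a1 := @A1 (tg n k) (tg n k.+1) (fun w => phi R p c (Nm n k w)) (c `^ p)
  (tg_ge0 n k) (tg_le n k k.+1 (leqnSn k)) (andP tk1T).2 (mphi c _ mNk)
  (fun w => ltac:(by rewrite phi_ge0 phi_le)) (fun v => F_phi n k c v n0 kn' c0).
have fin : ((q%:E * \int[P]_w (psi R p c (Nm n k w))%:E)%E \is a fin_num).
  rewrite fin_numM //; apply: (fin_bound _ (c `^ (p + 1))); first exact: mpsi.
  by move=> w; rewrite psi_ge0 psi_le.
rewrite -(leeD2lE _ _ fin).
apply: (le_trans _ (le_trans int1 _)); last by rewrite addeC.
rewrite addeCA addeC; apply: leeD2r; exact: le_trans IH a1.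
Qed.

Definition Mx w := running_max X T w.

Lemma M_attained w : exists2 c, 0 <= c <= T &
  Mx w = X c w /\ forall t, 0 <= t <= T -> X t w <= X c w.
Proof.
have [c cab hc] := EVT_max (ltW T0) (Xc w).
exists c; first by move: cab; rewrite in_itv.
have hc' t : 0 <= t <= T -> X t w <= X c w by move=> tT; apply: hc; rewrite in_itv.
split => //; rewrite /Mx /running_max; apply/le_anti/andP; split.
  apply: ge_sup; first by exists (X c w), c => //=; rewrite in_itv.
  by move=> _ [s /= sin <-]; apply: hc'; rewrite in_itv in sin.
apply: ub_le_sup; last by exists c => //=.
by exists (X c w) => _ [s /= sin <-]; apply: hc'; rewrite in_itv in sin.
Qed.

Lemma Nm_le_M n k w : (0 < n)%N -> (k <= n)%N -> Nm n k w <= Mx w.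
Proof.
move=> n0 kn; have [c cT [-> hc]] := M_attained w.
exact: Nm_le.
Qed.

Lemma Mx_ge0 w : 0 <= Mx w.
Proof.
apply: le_trans (Nm_le_M 1 0 w _ _) => //.
exact: le_trans x0_ge0 (Nm_ge_x0 _ _ _ _ _).
Qed.

Lemma Nm_cvg w : (fun n => Nm n.+1 n.+1 w) @ \oo --> Mx w.
Proof.
have [c cT [Me hc]] := M_attained w.
apply/cvgrPdist_lt => e e0.
have cin : c \in `[0, T] by rewrite in_itv.
have [del del0 H] := @cont_eps R (X^~ w) 0 T c e (Xc w) cin e0.
exists (Num.truncn (T / del)).+1 => // n /= Nn.
set m := n.+1.
have m0 : (0 < m)%N by [].
have mR0 : 0 < m%:R :> R by rewrite ltr0n.
set x := c * m%:R / T.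
have c0 : 0 <= c by case/andP: cT.
have x0' : 0 <= x by rewrite /x; apply: divr_ge0; [apply: mulr_ge0 => //; exact: ltW|exact: ltW].
have [kx xk] := andP (truncn_itv x0').
set k := Num.truncn x in kx xk.
have km : (k <= m)%N.
  rewrite truncn_le_nat; apply: (@le_lt_trans _ _ m%:R); last by rewrite ltr_nat.
  by rewrite /x ler_pdivrMr // mulrC ler_pM2l //; case/andP: cT.
have T0' : T != 0 by rewrite gt_eqF.
have m0' : m%:R != 0 :> R by rewrite gt_eqF.
have e1 : c - tg m k = (x - k%:R) * (T / m%:R) by rewrite /tg /x; field; rewrite T0' m0'.
have Tm0 : 0 < T / m%:R by rewrite divr_gt0.
have h3 : T / m%:R < del.
  rewrite ltr_pdivrMr // -ltr_pdivrMl //.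
  apply: (lt_le_trans (truncnS_gt _)); rewrite ler_nat.
  by rewrite mulrC; exact: leq_trans Nn (leqnSn n).
have ctg : `|c - tg m k| < del.
  have xk0 : 0 <= x - k%:R by rewrite subr_ge0.
  rewrite e1 ger0_norm; last by apply: mulr_ge0 => //; exact: ltW.
  apply: le_lt_trans h3; rewrite -[leRHS]mul1r ler_pM2r //.
  by rewrite lerBlDr addrC natr1 ltW.
have tkT : tg m k \in `[0, T] by rewrite in_itv /= tg_ge0 tg_leT.
have h4 := H _ tkT ctg.
change (`|Mx w - Nm m m w| < e).
move: h4.
have h1 := Nm_ge_X m k m w m0 (leqnn m) km.
have h2 := Nm_le_M m m w m0 (leqnn m).
rewrite Me in h2 *; move=> h4; rewrite ger0_norm ?subr_ge0 //.
apply: le_lt_trans h4; apply: le_trans (ler_norm _).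
by rewrite lerD2l lerN2.
Qed.

Lemma mMx : measurable_fun setT Mx.
Proof.
apply: (@measurable_fun_cvg _ _ _ _ (fun n => Nm n.+1 n.+1)).
  by move=> m; apply: Nm_meas.
by move=> w _; exact: Nm_cvg.
Qed.

Lemma psi_cvg w : (fun n => psi R p (n%:R + x0) (Nm n.+1 n.+1 w)) @ \oo --> Mx w `^ (p + 1).
Proof.
have Nb n : x0 <= Nm n.+1 n.+1 w <= Mx w.
  by rewrite Nm_ge_x0 // Nm_le_M.
have x00 := x0_ge0.
case: (eqVneq (Mx w) 0) => M0.
  have e n : psi R p (n%:R + x0) (Nm n.+1 n.+1 w) = Mx w `^ (p + 1).
    have N0 : Nm n.+1 n.+1 w = 0.
      by apply/le_anti; have := Nb n; rewrite M0 => /andP[h1 h2]; rewrite h2 (le_trans x00 h1).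
    by rewrite /psi N0 M0 min_l // addr_ge0.
  rewrite (_ : (fun n => _) = (fun=> Mx w `^ (p + 1))); last by apply/funext => n; exact: e.
  exact: cvg_cst.
have Mpos : 0 < Mx w by rewrite lt_def M0 Mx_ge0.
have hc := @powR_cont R (p + 1) _ Mpos.
have hlim := continuous_cvg _ hc (Nm_cvg w).
have H : \forall n \near \oo, ((fun x => x `^ (p + 1)) \o (fun n => Nm n.+1 n.+1 w)) n
    = psi R p (n%:R + x0) (Nm n.+1 n.+1 w).
  exists (Num.truncn (Mx w)).+1 => // n /= Nn.
  rewrite /psi min_l //; apply: le_trans (andP (Nb n)).2 _.
  apply: ltW; apply: (lt_le_trans (truncnS_gt _)).
  rewrite -[X in X <= _]addr0 lerD // ler_nat; exact: Nn.
have E := near_eq_cvg H. apply: (cvg_trans (E _)). exact: hlim.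
Qed.

Lemma einf_le (u : (\bar R)^nat) (L : \bar R) : (forall n, (u n <= L)%E) -> (limn_einf u <= L)%E.
Proof.
move=> uL; rewrite limn_einf_lim; apply: lime_le; first exact: is_cvg_einfs.
apply: nearW => n; apply: le_trans (uL n).
by apply: ereal_inf_lbound; exists n => /=.
Qed.

Lemma main_sec :
  ((p / (p + 1))%:E * \int[P]_w (Mx w `^ (p + 1))%:E
     + (1 / (p + 1) * x0 `^ (p + 1))%:E <= \int[P]_w (X T w * Mx w `^ p)%:E)%E.
Proof.
set q := p / (p + 1); set kap := 1 / (p + 1) * x0 `^ (p + 1).
have p10 : 0 < p + 1 by rewrite addr_gt0.
have q0 : 0 <= q by rewrite divr_ge0 // ltW.
have x00 := x0_ge0.
have kap0 : 0 <= kap by rewrite mulr_ge0 ?divr_ge0 ?powR_ge0 // ltW.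
have TT : 0 <= T <= T by rewrite lexx ltW.
have mXT := mX _ TT.
have XT0 w : 0 <= X T w by exact: Xge0.
set L := (\int[P]_w (X T w * Mx w `^ p)%:E)%E.
pose f n w := (q * psi R p (n%:R + x0) (Nm n.+1 n.+1 w) + kap)%:E.
have mf n : measurable_fun setT (f n).
  apply/measurable_EFinP; apply: measurable_funD; last exact: measurable_cst.
  by apply: measurable_funM; [exact: measurable_cst|apply: mpsi; exact: Nm_meas].
have f0 n w : (0 <= f n w)%E.
  by rewrite lee_fin addr_ge0 // mulr_ge0 // psi_ge0.
have bound n : (\int[P]_w f n w <= L)%E.
  have c0 : x0 <= n%:R + x0 by rewrite lerDr.
  have := @disc n.+1 (n%:R + x0) n.+1 erefl (leqnn _) c0.
  rewrite tgn // -/q.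
  have -> : x0 * phi R p (n%:R + x0) x0 - q * psi R p (n%:R + x0) x0 = kap.
    rewrite /phi /psi min_l // /kap /q powRS //; by field; rewrite gt_eqF.
  move=> h.
  have -> : (\int[P]_w f n w = q%:E * \int[P]_w (psi R p (n%:R + x0) (Nm n.+1 n.+1 w))%:E + kap%:E)%E.
    rewrite /f; under eq_integral do rewrite addrC.
    rewrite intDZ //; first by rewrite int_cst addeC.
    - by apply: mpsi; exact: Nm_meas.
    - by move=> w; exact: psi_ge0.
  apply: (le_trans h); apply: ge0_le_integral => //.
  - by move=> w _; rewrite lee_fin mulr_ge0 // phi_ge0.
  - by apply/measurable_EFinP; apply: measurable_funM; [apply: mphi; exact: Nm_meas|].
  - apply/measurable_EFinP; apply: measurable_funM => //.
    exact: (measurableT_comp (measurable_powR p) mMx).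
  - move=> w _; rewrite lee_fin mulrC; apply: ler_wpM2l => //.
    apply: ge0_ler_powR; first exact: ltW.
    + by rewrite nnegrE le_min (le_trans x00 (Nm_ge_x0 _ _ _ _ _)) // addr_ge0.
    + by rewrite nnegrE Mx_ge0.
    + by rewrite ge_min Nm_le_M.
have lim w : limn_einf (f^~ w) = (q * Mx w `^ (p + 1) + kap)%:E.
  have hc : f^~ w @ \oo --> (q * Mx w `^ (p + 1) + kap)%:E.
    apply: cvg_EFin; first exact: nearW.
    apply: cvgD; last exact: cvg_cst.
    by apply: cvgM; [exact: cvg_cst|exact: psi_cvg].
  by rewrite is_cvg_limn_einfE ?(cvg_lim _ hc) //; apply/cvg_ex; eexists; exact: hc.
have fat := fatou P measurableT mf (fun n x _ => f0 n x).
have e : (\int[P]_w limn_einf (f^~ w) = \int[P]_w (q * Mx w `^ (p + 1) + kap)%:E)%E.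
  by apply: eq_integral => w _; exact: lim.
rewrite e in fat.
have e2 : (\int[P]_w (q * Mx w `^ (p + 1) + kap)%:E =
    q%:E * \int[P]_w (Mx w `^ (p + 1))%:E + kap%:E)%E.
  under eq_integral do rewrite addrC.
  rewrite intDZ //; first by rewrite int_cst addeC.
  - exact: (measurableT_comp (measurable_powR (p + 1)) mMx).
  - by move=> w; exact: powR_ge0.
by rewrite -e2; exact: le_trans fat (einf_le _ _ bound).
Qed.

End Main.

Theorem mainTheorem3 (d : measure_display) (Omega : measurableType d)
  (R : realType) (P : probability Omega R) (T : R)
  (F : R -> set (set Omega)) (X QV : R -> Omega -> R) (x0 p : R) :
  0 < T ->
  filtration T F ->
  submartingale P T F X ->
  (forall t w, 0 <= t <= T -> 0 <= X t w) ->
  (forall w, {within `[0, T], continuous (fun t => X t w)}) ->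
  (forall w, X 0 w = x0) ->
  quadratic_variation P T X QV ->
  0 < p ->
  (\int[P]_w rs_integral T
      (fun t w => (running_max X t w `^ (2 * p))%R) QV w < +oo)%E ->
  (\int[P]_w (X T w * running_max X T w `^ p)%R%:E >=
     (p / (p + 1))%R%:E * \int[P]_w (running_max X T w `^ (p + 1))%R%:E
     + (1 / (p + 1) * x0 `^ (p + 1))%R%:E)%E.
Proof.
move=> T0 hF hX Xge0 Xc X0 qv p0 _.
have := @main_sec d Omega R P T F X x0 p T0 hF hX Xge0 Xc X0 p0.
rewrite /Mx.
exact.
Qed.
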